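(* Assume $\mu$ satisfies (C). Let $S(\Gamma):=\{\log\lambda_{\mathbf a}:\mathbf a\in\Gamma,\ \mathbf a\text{ has all entries strictly positive}\}$, where $\lambda_{\mathbf a}$ is the Perron–Frobenius (dominant) eigenvalue of $\mathbf a$. If the additive subgroup of $\mathbb R$ generated by $S(\Gamma)$ is dense in $\mathbb R$, then $\mu$ is non-arithmetic.
   Context: Let $|\cdot|$ be a norm on $\mathbb R^d$. $\mu$ is a probability measure on real $d\times d$ matrices, $\Gamma$ the closed semigroup generated by $\operatorname{supp}\mu$. Condition (C): $\mu$ is supported on nonnegative matrices, every matrix of $\Gamma$ is allowable (each row and column has a positive entry), and $\Gamma$ contains a matrix with all entries strictly positive. $\mathcal S_+:=\{x\in\mathbb R^d:x_i\ge0,|x|=1\}$, $\mathbf a\cdot x:=\mathbf ax/|\mathbf ax|$, $V(\Gamma)$ = closure of the set of normalized Perron–Frobenius eigenvectors $v_{\mathbf a}\in\mathcal S_+$ of matrices $\mathbf a\in\Gamma$ with all entries positive. $\mu$ is arithmetic if there exist $t>0$, $\theta\in[0,2\pi)$ and a function $\vartheta:\mathcal S_+\to\mathbb R$ with $\exp(it\log|\mathbf ax|-i\theta+i(\vartheta(\mathbf a\cdot x)-\vartheta(x)))=1$ for all $\mathbf a\in\Gamma$, $x\in V(\Gamma)$; otherwise non-arithmetic. *)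

(* Defs.v *)
(* A vector is a function nat -> R whose coordinates i >= d vanish;
   a matrix is a function nat -> nat -> R whose entries outside [0,d)^2 vanish. *)
From Stdlib Require Import Reals List.
Import ListNotations.
Open Scope R_scope.

Definition Vec := nat -> R.
Definition Mat := nat -> nat -> R.

Definition sumR (d : nat) (f : nat -> R) : R :=
  fold_right Rplus 0 (map f (seq 0 d)).

Definition padded (d : nat) (x : Vec) : Prop :=
  forall i, (d <= i)%nat -> x i = 0.

Definition wf_mat (d : nat) (a : Mat) : Prop :=
  forall i j, (d <= i)%nat \/ (d <= j)%nat -> a i j = 0.

Definition mulmv (d : nat) (a : Mat) (x : Vec) : Vec :=
  fun i => if Nat.ltb i d then sumR d (fun j => a i j * x j) else 0.

Definition mulmm (d : nat) (a b : Mat) : Mat :=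
  fun i j => if andb (Nat.ltb i d) (Nat.ltb j d)
             then sumR d (fun k => a i k * b k j) else 0.

Definition vscale (c : R) (x : Vec) : Vec := fun i => c * x i.
Definition vadd (x y : Vec) : Vec := fun i => x i + y i.

Definition IsNorm (d : nat) (N : Vec -> R) : Prop :=
  (forall x, padded d x -> 0 <= N x) /\
  (forall x, padded d x -> N x = 0 -> forall i, x i = 0) /\
  (forall c x, padded d x -> N (vscale c x) = Rabs c * N x) /\
  (forall x y, padded d x -> padded d y -> N (vadd x y) <= N x + N y).

(* topology (entrywise; all norms on finite-dim spaces are equivalent) *)
Definition mat_closure (d : nat) (T : Mat -> Prop) (a : Mat) : Prop :=
  forall eps, 0 < eps -> exists b, T b /\
    forall i j, (i < d)%nat -> (j < d)%nat -> Rabs (a i j - b i j) < eps.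

Definition mat_closed (d : nat) (T : Mat -> Prop) : Prop :=
  forall a, wf_mat d a -> mat_closure d T a -> T a.

Definition vec_closure (d : nat) (T : Vec -> Prop) (x : Vec) : Prop :=
  padded d x /\
  forall eps, 0 < eps -> exists v, T v /\
    forall i, (i < d)%nat -> Rabs (x i - v i) < eps.

Definition closed_semigroup (d : nat) (S : Mat -> Prop) (a : Mat) : Prop :=
  wf_mat d a /\
  forall T : Mat -> Prop,
    (forall b, S b -> T b) ->
    (forall b c, T b -> T c -> T (mulmm d b c)) ->
    mat_closed d T -> T a.

Definition nonneg_mat (d : nat) (a : Mat) : Prop :=
  forall i j, (i < d)%nat -> (j < d)%nat -> 0 <= a i j.

Definition pos_mat (d : nat) (a : Mat) : Prop :=
  forall i j, (i < d)%nat -> (j < d)%nat -> 0 < a i j.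

Definition allowable (d : nat) (a : Mat) : Prop :=
  (forall i, (i < d)%nat -> exists j, (j < d)%nat /\ 0 < a i j) /\
  (forall j, (j < d)%nat -> exists i, (i < d)%nat /\ 0 < a i j).

(* Condition (C), in terms of S = supp mu and Gamma *)
Definition condC (d : nat) (S : Mat -> Prop) : Prop :=
  (forall a, S a -> nonneg_mat d a) /\
  (forall a, closed_semigroup d S a -> allowable d a) /\
  (exists a, closed_semigroup d S a /\ pos_mat d a).

(* (lam, v) is the Perron-Frobenius pair of the positive matrix a:
   v is the (unique) eigenvector with positive entries, normalised in S_+,
   and lam its eigenvalue (the dominant eigenvalue). *)
Definition PF_pair (d : nat) (N : Vec -> R) (a : Mat) (lam : R) (v : Vec) : Prop :=
  padded d v /\ (forall i, (i < d)%nat -> 0 < v i) /\ N v = 1 /\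
  mulmv d a v = vscale lam v.

Definition SGamma (d : nat) (N : Vec -> R) (S : Mat -> Prop) (s : R) : Prop :=
  exists a lam v, closed_semigroup d S a /\ pos_mat d a /\
    PF_pair d N a lam v /\ s = ln lam.

Definition VGamma (d : nat) (N : Vec -> R) (S : Mat -> Prop) : Vec -> Prop :=
  vec_closure d (fun v => exists a lam, closed_semigroup d S a /\ pos_mat d a /\
                                         PF_pair d N a lam v).

Definition add_subgroup_gen (A : R -> Prop) (y : R) : Prop :=
  forall G : R -> Prop,
    G 0 -> (forall u v, G u -> G v -> G (u - v)) -> (forall u, A u -> G u) -> G y.

Definition dense_in_R (G : R -> Prop) : Prop :=
  forall x eps, 0 < eps -> exists y, G y /\ Rabs (x - y) < eps.

Definition act (d : nat) (N : Vec -> R) (a : Mat) (x : Vec) : Vec :=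
  vscale (/ N (mulmv d a x)) (mulmv d a x).

(* exp(i phi) = 1, written out as cos phi = 1 /\ sin phi = 0 *)
Definition arithmetic (d : nat) (N : Vec -> R) (S : Mat -> Prop) : Prop :=
  exists (t theta : R) (vt : Vec -> R),
    0 < t /\ 0 <= theta < 2 * PI /\
    forall a x, closed_semigroup d S a -> VGamma d N S x ->
      let phi := t * ln (N (mulmv d a x)) - theta + (vt (act d N a x) - vt x) in
      cos phi = 1 /\ sin phi = 0.

Definition non_arithmetic (d : nat) (N : Vec -> R) (S : Mat -> Prop) : Prop :=
  ~ arithmetic d N S.

(* Main.v *)
Require Import Defs.
From Stdlib Require Import Reals List Lra Lia ZArith FunctionalExtensionality.
Open Scope R_scope.

Lemma sumR_S n f : sumR (S n) f = sumR n f + f n.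
Proof.
  unfold sumR. rewrite seq_S, map_app, fold_right_app. simpl.
  generalize (f n). induction (map f (seq 0 n)) as [|x l IH]; intro r; simpl.
  - ring.
  - rewrite IH. ring.
Qed.

Lemma sumR_ext n f g : (forall i, (i < n)%nat -> f i = g i) -> sumR n f = sumR n g.
Proof.
  induction n; intro H; [reflexivity|]. rewrite !sumR_S, IHn, H; auto.
Qed.

Lemma sumR_scale n c f : sumR n (fun i => c * f i) = c * sumR n f.
Proof. induction n; [unfold sumR; simpl; ring|]. rewrite !sumR_S, IHn. ring. Qed.

Lemma sumR_add n f g : sumR n (fun i => f i + g i) = sumR n f + sumR n g.
Proof. induction n; [unfold sumR; simpl; ring|]. rewrite !sumR_S, IHn. ring. Qed.

Lemma sumR_0 n : sumR n (fun _ => 0) = 0.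
Proof. induction n; [reflexivity|]. rewrite sumR_S, IHn. ring. Qed.

Lemma sumR_swap n m F :
  sumR n (fun i => sumR m (fun j => F i j)) = sumR m (fun j => sumR n (fun i => F i j)).
Proof.
  induction n.
  - unfold sumR at 1. simpl. symmetry. apply sumR_0.
  - rewrite sumR_S, IHn.
    rewrite <- sumR_add. apply sumR_ext. intros. rewrite sumR_S. reflexivity.
Qed.

Lemma sumR_pos n f : (0 < n)%nat -> (forall i, (i < n)%nat -> 0 < f i) -> 0 < sumR n f.
Proof.
  intros Hn H. destruct n; [lia|]. clear Hn.
  rewrite sumR_S. assert (0 <= sumR n f).
  { clear - H. induction n. unfold sumR; simpl; lra.
    rewrite sumR_S. assert (0 < f n) by (apply H; lia).
    assert (0 <= sumR n f) by (apply IHn; intros; apply H; lia). lra. }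
  assert (0 < f n) by (apply H; lia). lra.
Qed.

Lemma mulmv_mulmm d a b x :
  mulmv d (mulmm d a b) x = mulmv d a (mulmv d b x).
Proof.
  apply functional_extensionality. intro i. unfold mulmv.
  destruct (Nat.ltb i d) eqn:Hi; [|reflexivity].
  transitivity (sumR d (fun j => sumR d (fun k => a i k * b k j * x j))).
  - apply sumR_ext. intros j Hj. unfold mulmm. rewrite Hi.
    apply Nat.ltb_lt in Hj. rewrite Hj. simpl.
    rewrite Rmult_comm, <- sumR_scale. apply sumR_ext. intros. ring.
  - rewrite sumR_swap. apply sumR_ext. intros k Hk.
    apply Nat.ltb_lt in Hk. rewrite Hk.
    rewrite <- sumR_scale. apply sumR_ext. intros. ring.
Qed.

Lemma mulmv_scale d a c x : mulmv d a (vscale c x) = vscale c (mulmv d a x).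
Proof.
  apply functional_extensionality. intro i. unfold mulmv, vscale.
  destruct (Nat.ltb i d); [|ring].
  rewrite <- sumR_scale. apply sumR_ext. intros. ring.
Qed.

Lemma key d N S t theta vt :
  IsNorm d N ->
  (forall a x, closed_semigroup d S a -> VGamma d N S x ->
      let phi := t * ln (N (mulmv d a x)) - theta + (vt (act d N a x) - vt x) in
      cos phi = 1 /\ sin phi = 0) ->
  forall s, SGamma d N S s -> exists k : Z, t * s = IZR k * PI.
Proof.
  intros [N0 [N1 [N2 N3]]] H s [a [lam [v [Ha [Hpos [[Hpad [Hvpos [Hnv Heig]]] ->]]]]]].
  assert (Hd : (0 < d)%nat).
  { destruct d; [|lia]. exfalso.
    assert (v = vscale 0 v).
    { apply functional_extensionality. intro i. unfold vscale.
      rewrite (Hpad i); [ring|lia]. }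
    rewrite H0, N2 in Hnv by auto. rewrite Rabs_R0 in Hnv. lra. }
  assert (Hlam : 0 < lam).
  { assert (E := f_equal (fun f => f 0%nat) Heig). simpl in E.
    unfold mulmv, vscale in E.
    assert (Hl : Nat.ltb 0 d = true) by (apply Nat.ltb_lt; auto).
    rewrite Hl in E.
    assert (0 < sumR d (fun j => a 0%nat j * v j)).
    { apply sumR_pos; auto. intros. apply Rmult_lt_0_compat; auto. }
    assert (0 < v 0%nat) by auto.
    destruct (Rle_or_lt lam 0); [|auto]. nra. }
  assert (HV : VGamma d N S v).
  { split; auto. intros eps He. exists v. split.
    - exists a, lam. split; [exact Ha|split; [exact Hpos| exact (conj Hpad (conj Hvpos (conj Hnv Heig)))]].
    - intros. unfold Rminus. rewrite Rplus_opp_r, Rabs_R0. auto. }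
  assert (Hact : forall c, 0 < c -> mulmv d a v = vscale lam v ->
            vscale (/ N (vscale c v)) (vscale c v) = v).
  { intros c Hc _. rewrite N2 by auto. rewrite Hnv, Rabs_pos_eq by lra.
    apply functional_extensionality. intro i. unfold vscale. field. lra. }
  destruct (H a v Ha HV) as [_ S1].
  assert (Ha2 : closed_semigroup d S (mulmm d a a)).
  { split.
    - intros i j Hij. unfold mulmm.
      destruct (Nat.ltb i d) eqn:E1; destruct (Nat.ltb j d) eqn:E2; simpl; auto.
      apply Nat.ltb_lt in E1. apply Nat.ltb_lt in E2. lia.
    - intros T HS HM HC. destruct Ha as [_ Ha]. apply HM; apply Ha; auto. }
  destruct (H _ v Ha2 HV) as [_ S2].
  unfold act in S1, S2. rewrite mulmv_mulmm, Heig, mulmv_scale, Heig in S2.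
  assert (E2 : vscale lam (vscale lam v) = vscale (lam * lam) v).
  { apply functional_extensionality; intro; unfold vscale; ring. }
  rewrite E2 in S2. rewrite Heig in S1.
  rewrite (Hact lam) in S1 by auto.
  rewrite (Hact (lam*lam)) in S2 by (auto; nra).
  rewrite N2, Hnv, Rabs_pos_eq in S1 by (auto; lra).
  rewrite N2, Hnv, Rabs_pos_eq in S2 by (auto; nra).
  rewrite Rmult_1_r in S1, S2. rewrite ln_mult in S2 by auto.
  apply sin_eq_0_0 in S1. apply sin_eq_0_0 in S2.
  destruct S1 as [k1 K1]. destruct S2 as [k2 K2].
  exists (k2 - k1)%Z. rewrite minus_IZR. lra.
Qed.

Theorem lemma2p4 (d : nat) (N : Vec -> R) (suppmu : Mat -> Prop) :
  IsNorm d N ->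
  (forall a, suppmu a -> wf_mat d a) ->
  (exists a, suppmu a) ->
  mat_closed d suppmu ->
  condC d suppmu ->
  dense_in_R (add_subgroup_gen (SGamma d N suppmu)) ->
  non_arithmetic d N suppmu.
Proof.
  intros HN _ _ _ _ Hden [t [theta [vt [Ht [_ H]]]]].
  pose proof (key d N suppmu t theta vt HN H) as K.
  assert (Hpi := PI_RGT_0).
  destruct (Hden (PI / (2 * t)) (PI / (2 * t))) as [y [Gy Hy]].
  { apply Rdiv_lt_0_compat; lra. }
  destruct (Gy (fun y => exists k : Z, t * y = IZR k * PI)) as [k Hk].
  - exists 0%Z. simpl. ring.
  - intros u v [k1 H1] [k2 H2]. exists (k1 - k2)%Z. rewrite minus_IZR.
    rewrite Rmult_minus_distr_l, H1, H2. ring.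
  - exact K.
  - apply Rabs_def2 in Hy. destruct Hy as [Hy1 Hy2].
    assert (A : 0 < t * y < PI).
    { assert (E : t * (PI / (2 * t)) = PI / 2) by (field; lra).
      split.
      + assert (0 < y).
        { assert (y > PI / (2*t) - PI / (2*t)) by lra. lra. }
        nra.
      + assert (y < 2 * (PI / (2 * t))) by lra.
        assert (t * y < t * (2 * (PI / (2 * t)))) by nra. lra. }
    rewrite Hk in A. destruct A as [A1 A2].
    assert (0 < IZR k) by nra. assert (IZR k < 1) by nra.
    apply lt_0_IZR in H0. apply lt_IZR in H1. lia.
Qed.
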